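(* The problem \textsc{Diameter} is $2$-GP-hard with respect to the combined parameter ``bisection width plus minimum degree''. That is, there is an algorithm that, given any undirected connected unweighted graph $G$ (with $n$ vertices and $m$ edges) and integer $t$, runs in $O(n+m)$ time and outputs an undirected connected unweighted graph $G'$ and integer $t'$ such that $d(G)\ge t$ if and only if $d(G')\ge t'$, the size of $(G',t')$ is $O(n+m)$, and the bisection width of $G'$ plus the minimum degree of $G'$ is at most $2$.
   Context: \textsc{Diameter}: given an undirected, connected, unweighted graph $G$, compute its diameter $d(G)$, the length of a longest shortest path; its decision version asks, given $G$ and integer $t$, whether $d(G)\ge t$. A parameterized problem $P$ with associated unparameterized problem $\hat P$ is $\ell$-GP-hard if there is an algorithm transforming any instance $I$ of $\hat P$ into an instance $(I',k')$ of $P$ in time linear in $|I|$, such that $I\in\hat P\iff (I',k')\in P$, $k'\le\ell$, and $|I'|\in O(|I|)$. The bisection width of a graph is the minimum number of edges to delete in order to partition its vertex set into two parts whose sizes differ by at most one with no edges between them. *)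

(* Defs.v *)
From mathcomp Require Import all_boot.
Set Implicit Arguments. Unset Strict Implicit. Unset Printing Implicit Defensive.

(* Graphs: vertices 0..gn-1, edges as a list of (unordered) pairs.    *)
Record graph := Graph { gn : nat; gE : seq (nat * nat) }.

Definition gm (G : graph) : nat := size (gE G).

Definition adj (G : graph) (u v : nat) : bool :=
  ((u, v) \in gE G) || ((v, u) \in gE G).

Definition simple_graph (G : graph) : bool :=
  all (fun e => [&& e.1 < gn G, e.2 < gn G & e.1 != e.2]) (gE G)
  && uniq [seq (minn e.1 e.2, maxn e.1 e.2) | e <- gE G].

Fixpoint reach (G : graph) (k : nat) (u v : nat) : bool :=
  match k with
  | 0 => u == v
  | k'.+1 => reach G k' u v
             || has (fun w => reach G k' u w && adj G w v) (iota 0 (gn G))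
  end.

(* connected (and nonempty): every pair is joined by a walk; a walk can
   always be shortened to length < gn G *)
Definition connected (G : graph) : Prop :=
  0 < gn G /\ forall u v, u < gn G -> v < gn G -> reach G (gn G) u v.

(* shortest-path distance (the least k with a walk of length <= k);
   equals gn G if unreachable, which never happens in connected graphs *)
Definition dist (G : graph) (u v : nat) : nat :=
  find (fun k => reach G k u v) (iota 0 (gn G)).

Definition diameter (G : graph) : nat :=
  \max_(u < gn G) \max_(v < gn G) dist G u v.

Definition degree (G : graph) (v : nat) : nat :=
  count (adj G v) (iota 0 (gn G)).

Definition min_degree (G : graph) : nat :=
  \big[minn/gn G]_(v < gn G) degree G v.

Definition balanced (G : graph) (A : {set 'I_(gn G)}) : bool :=
  (#|A| == (gn G)./2) || (#|A| == uphalf (gn G)).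

Definition inA (G : graph) (A : {set 'I_(gn G)}) (x : nat) : bool :=
  [exists i in A, val i == x].

Definition cut (G : graph) (A : {set 'I_(gn G)}) : nat :=
  count (fun e => inA A e.1 != inA A e.2) (gE G).

(* bisection width: minimum number of crossing edges over balanced
   bipartitions (a balanced A always exists; gm G is a mere upper bound) *)
Definition bisection_width (G : graph) : nat :=
  \big[minn/gm G]_(A : {set 'I_(gn G)} | balanced A) cut A.

(* Machine model: unit-cost RAM with addition, truncated subtraction, *)
(* direct/indirect addressing and conditional jumps; word size bounded *)
(* by W (writing a value > W is a fault).                              *)
Inductive instr :=
  | ICONST of nat & nat
  | IADD of nat & nat & nat
  | ISUB of nat & nat & nat
  | ILOAD of nat & nat
  | ISTORE of nat & nat
  | IJZ of nat & nat
  | IHALT.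

Definition memory := nat -> nat.

Definition upd (M : memory) (a x : nat) : memory := fun i => if i == a then x else M i.

Inductive outcome := OHalt | OFault | ONext of nat & memory.

Definition write (W : nat) (pc : nat) (M : memory) (a x : nat) : outcome :=
  if x <= W then ONext pc.+1 (upd M a x) else OFault.

Definition step (W : nat) (P : seq instr) (pc : nat) (M : memory) : outcome :=
  match nth IHALT P pc with
  | ICONST a k => write W pc M a k
  | IADD a b c => write W pc M a (M b + M c)
  | ISUB a b c => write W pc M a (M b - M c)
  | ILOAD a b => write W pc M a (M (M b))
  | ISTORE a b => write W pc M (M a) (M b)
  | IJZ a l => if M a == 0 then ONext l M else ONext pc.+1 M
  | IHALT => OHalt
  end.

(* run W P fuel pc M = Some M' iff P halts (executing at most fuel
   instructions, the halt included) without fault, with final memory M' *)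
Fixpoint run (W : nat) (P : seq instr) (fuel pc : nat) (M : memory) : option memory :=
  match fuel with
  | 0 => None
  | f.+1 => match step W P pc M with
            | OHalt => Some M
            | OFault => None
            | ONext pc' M' => run W P f pc' M'
            end
  end.

(* Encoding of an instance (G, t): M[0]=n, M[1]=m, M[2]=t, and the i-th
   edge (u,v) at M[3+2i]=u, M[4+2i]=v; everything else 0. *)
Definition init_mem (G : graph) (t : nat) : memory := fun i =>
  if i == 0 then gn G else if i == 1 then gm G else if i == 2 then t
  else let j := i - 3 in
       if j./2 < gm G then
         let e := nth (0, 0) (gE G) j./2 in if odd j then e.2 else e.1
       else 0.

Definition decode_graph (M : memory) : graph :=
  Graph (M 0) [seq (M (3 + 2 * i), M (4 + 2 * i)) | i <- iota 0 (M 1)].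
Definition decode_t (M : memory) : nat := M 2.

(* Main.v *)
Require Import Defs.
From mathcomp Require Import all_boot zify.
From Stdlib Require Import FunctionalExtensionality.
Set Implicit Arguments. Unset Strict Implicit. Unset Printing Implicit Defensive.

Section Reach.
Variable G : graph.

Lemma reach_mono1 k a b : reach G k a b -> reach G k.+1 a b.
Proof. by move=> h /=; rewrite h. Qed.

Lemma reach_mono k k' a b : k <= k' -> reach G k a b -> reach G k' a b.
Proof.
move=> /subnK <-; elim: (k' - k) => [|d IH] // h.
rewrite addSn; apply: reach_mono1; exact: IH h.
Qed.

Lemma reach_adj a b : a < gn G -> adj G a b -> reach G 1 a b.
Proof.
move=> ha hab /=; apply/orP; right; apply/hasP; exists a.
  by rewrite mem_iota.
by rewrite eqxx.
Qed.

Lemma reach_trans i j a b c : reach G i a b -> reach G j b c -> reach G (i + j) a c.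
Proof.
move=> hi; elim: j c => [|j IH] c /=.
  by move/eqP => <-; rewrite addn0.
rewrite addnS /= => /orP [h|/hasP [w hw /andP [h1 h2]]].
  by rewrite IH.
apply/orP; right; apply/hasP; exists w => //; by rewrite IH.
Qed.

Lemma reach_lip (f : nat -> nat) k a b :
  (forall x y, adj G x y -> f y <= f x + 1) -> reach G k a b -> f b <= f a + k.
Proof.
move=> hf; elim: k b => [|k IH] b /=.
  by move/eqP => ->; rewrite addn0.
move=> /orP [h|/hasP [w hw /andP [h1 h2]]].
  by have := IH _ h; lia.
have := IH _ h1; have := hf _ _ h2; lia.
Qed.

Lemma reach_lift (H : graph) k a b : gn G <= gn H ->
  (forall x y, adj G x y -> adj H x y) -> reach G k a b -> reach H k a b.
Proof.
move=> hn hadj; elim: k b => [|k IH] b //=.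
move=> /orP [h|/hasP [w hw /andP [h1 h2]]].
  by rewrite IH.
apply/orP; right; apply/hasP; exists w.
  by move: hw; rewrite !mem_iota; lia.
by rewrite IH // hadj.
Qed.

Lemma dist_le k u v : reach G k u v -> dist G u v <= k.
Proof.
move=> h; rewrite /dist.
case: (ltnP k (gn G)) => hk.
  rewrite leqNgt; apply/negP => hlt.
  have := before_find 0 hlt.
  by rewrite nth_iota // add0n h.
by apply: leq_trans (find_size _ _) _; rewrite size_iota.
Qed.

Lemma dist_size u v : dist G u v <= gn G.
Proof. by rewrite /dist; apply: leq_trans (find_size _ _) _; rewrite size_iota. Qed.

Lemma dist_reach u v k : reach G k u v -> k < gn G -> reach G (dist G u v) u v.
Proof.
move=> h hk; rewrite /dist.
have hh : has (fun k => reach G k u v) (iota 0 (gn G)).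
  by apply/hasP; exists k => //; rewrite mem_iota.
have hf := hh; rewrite has_find size_iota in hf.
by have := nth_find 0 hh; rewrite nth_iota ?add0n.
Qed.

End Reach.

Lemma count_le_in (T : eqType) (p q : pred T) (s : seq T) :
  (forall x, x \in s -> p x -> q x) -> count p s <= count q s.
Proof.
elim: s => [|y s IH] h //=.
have h' : forall z, z \in s -> p z -> q z by move=> z hz; apply: h; rewrite inE hz orbT.
have := IH h'; case hp: (p y); case hq: (q y) => //=.
- by have := h y (mem_head _ _) hp; rewrite hq.
- move=> hh; apply: leq_trans hh _; exact: leq_addl.
Qed.

Lemma count_lt (T : eqType) (p q : pred T) (s : seq T) :
  (forall x, x \in s -> p x -> q x) -> (exists2 x, x \in s & q x && ~~ p x) ->
  count p s < count q s.
Proof.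
elim: s => [|y s IH] hpq [x]; first by [].
have hpq2 : forall z, z \in s -> p z -> q z.
  by move=> z hz hpz; apply: (hpq z) => //; rewrite inE hz orbT.
rewrite inE => /orP [/eqP hxy | hx] hqp /=.
  subst x.
  move/andP: hqp => [hq /negbTE hp]; rewrite hq hp /=.
  by rewrite add1n ltnS; apply: count_le_in.
have := IH hpq2 (ex_intro2 _ _ x hx hqp).
case hp: (p y); case hq: (q y) => /=.
- move=> h; lia.
- by have := hpq y (mem_head _ _) hp; rewrite hq.
- move=> h; lia.
- move=> h; lia.
Qed.

Section Short.
Variable G : graph.
Variable u : nat.
Notation n := (gn G).

Lemma stable_step k : (forall w, w < n -> reach G k.+1 u w = reach G k u w) ->
  forall w, w < n -> reach G k.+2 u w = reach G k.+1 u w.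
Proof.
move=> hs w hw.
have -> : reach G k.+2 u w = reach G k.+1 u w
   || has (fun x => reach G k.+1 u x && adj G x w) (iota 0 n) by [].
apply/idP/idP => [/orP [//|/hasP [x hx /andP [h1 h2]]]| h]; last by rewrite h.
have hx' : x < n by move: hx; rewrite mem_iota.
rewrite hs // in h1.
apply/orP; right; apply/hasP; exists x => //; apply/andP; split; [exact: h1 | exact: h2].
Qed.

Lemma stable_P k : (forall w, w < n -> reach G k.+1 u w = reach G k u w) ->
  forall j, k <= j -> forall w, w < n -> reach G j.+1 u w = reach G j u w.
Proof.
move=> hs; elim => [|j IH] hkj.
  have hk0 : k = 0 by lia.
  by subst k.
case: (ltnP k j.+1) => h.
  by apply: stable_step; apply: IH; lia.
have hk0 : k = j.+1 by lia.
by subst k.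
Qed.

Lemma stable_all k : (forall w, w < n -> reach G k.+1 u w = reach G k u w) ->
  forall j w, k <= j -> w < n -> reach G j u w = reach G k u w.
Proof.
move=> hs; elim => [|j IH] w hkj hw.
  have hk0 : k = 0 by lia.
  by subst k.
case: (ltnP k j.+1) => h.
  rewrite (stable_P hs); [apply: IH|..]; lia.
have hk0 : k = j.+1 by lia.
by subst k.
Qed.

Definition cnt k := count (fun w => reach G k u w) (iota 0 n).

Lemma reach_shorten k v : u < n -> v < n -> reach G k u v -> reach G n.-1 u v.
Proof.
move=> hu hv hk.
case: (leqP k n.-1) => hkn; first exact: reach_mono hkn hk.
case hst: (has (fun i => all (fun w => reach G i.+1 u w ==> reach G i u w) (iota 0 n))
                (iota 0 n.-1)).
  move/hasP: hst => [i hi /allP hall].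
  have hs : forall w, w < n -> reach G i.+1 u w = reach G i u w.
    move=> w hw; apply/idP/idP; last exact: reach_mono1.
    by move/implyP: (hall w ltac:(rewrite mem_iota; lia)).
  have hi' : i < n.-1 by move: hi; rewrite mem_iota.
  rewrite (stable_all hs (j:=k) (w:=v)) in hk; [|lia|lia].
  apply: reach_mono hk; lia.
have hinc : forall i, i < n.-1 -> cnt i < cnt i.+1.
  move=> i hi; apply: count_lt.
    by move=> x _; apply: reach_mono1.
  move/negbT/hasPn: hst => /(_ i ltac:(rewrite mem_iota; lia)) /allPn [w hw hn].
  exists w => //.
  by move: hn; case: (reach G i.+1 u w); case: (reach G i u w).
have hc0 : 1 <= cnt 0.
  rewrite /cnt -has_count; apply/hasP; exists u; [by rewrite mem_iota | exact: eqxx].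
have hci : forall i, i <= n.-1 -> i.+1 <= cnt i.
  elim => [|i IH] hi //.
  have := hinc i hi; have := IH (ltnW hi); lia.
have := hci n.-1 (leqnn _).
have hn0 : 0 < n by lia.
have hle : cnt n.-1 <= n by rewrite /cnt; apply: leq_trans (count_size _ _) _; rewrite size_iota.
move=> hge.
have : count (fun w => reach G n.-1 u w) (iota 0 n) == size (iota 0 n).
  rewrite size_iota; apply/eqP; rewrite /cnt in hle hge; lia.
rewrite -all_count => /allP; apply; by rewrite mem_iota.
Qed.

End Short.

Definition ne (n i : nat) : nat * nat :=
  if i < 2 * n then
    (if i %% 2 == 0 then (n - 1 - i %/ 2, 2 * n - 1 - i %/ 2)
     else (2 * n - 1 - i %/ 2, 3 * n - 1 - i %/ 2))
  else if i == 2 * n then (0, 3 * n) else (3 * n, 8 * n - i).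

Definition NE n := map (ne n) (iota 0 (5 * n)).

Definition Gout (G : graph) := Graph (6 * gn G) (gE G ++ NE (gn G)).

Definition nei n (e : nat * nat) : nat :=
  let b := e.2 in
  if b < 2 * n then 2 * (2 * n - 1 - b) else if b < 3 * n then 2 * (3 * n - 1 - b) + 1
  else if b == 3 * n then 2 * n else 8 * n - b.

Ltac ifs := repeat (case: ifP => /=; let h := fresh "hif" in move=> h).

Lemma nei_ne n i : i < 5 * n -> nei n (ne n i) = i.
Proof. move=> hi; rewrite /ne; ifs; rewrite /nei /=; ifs; lia. Qed.

Lemma ne_cases n i : 0 < n -> i < 5 * n ->
  [\/ exists2 j, j < n & ne n i = (j, n + j),
      exists2 j, j < n & ne n i = (n + j, 2 * n + j),
      ne n i = (0, 3 * n) |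
      ((ne n i).1 = 3 * n /\ 3 * n < (ne n i).2 < 6 * n)].
Proof.
move=> hn hi; rewrite /ne; ifs.
- constructor 1; exists (n - 1 - i %/ 2); first lia. congr pair; lia.
- constructor 2; exists (n - 1 - i %/ 2); first lia. congr pair; lia.
- constructor 3; congr pair; lia.
- constructor 4; split => //=; lia.
Qed.

Lemma memNE n a b : ((a, b) \in NE n) = [exists i : 'I_(5 * n), ne n i == (a, b)].
Proof.
apply/mapP/existsP => [[i hi he]|[i /eqP he]].
  move: hi; rewrite mem_iota add0n => hi; exists (Ordinal hi); by rewrite -he.
exists (val i) => //; by rewrite mem_iota add0n ltn_ord.
Qed.

Lemma inNE n i : i < 5 * n -> ne n i \in NE n.
Proof. move=> hi; apply: map_f; by rewrite mem_iota. Qed.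

Lemma NE_col1 n j : j < n -> (j, n + j) \in NE n.
Proof.
move=> hj; have -> : (j, n + j) = ne n (2 * (n - 1 - j)).
  rewrite /ne; ifs; try lia; congr pair; lia.
apply: inNE; lia.
Qed.

Lemma NE_col2 n j : j < n -> (n + j, 2 * n + j) \in NE n.
Proof.
move=> hj; have -> : (n + j, 2 * n + j) = ne n (2 * (n - 1 - j) + 1).
  rewrite /ne; ifs; try lia; congr pair; lia.
apply: inNE; lia.
Qed.

Lemma NE_y n : 0 < n -> (0, 3 * n) \in NE n.
Proof.
move=> hn; have -> : (0, 3 * n) = ne n (2 * n).
  rewrite /ne; ifs; try lia; congr pair; lia.
apply: inNE; lia.
Qed.

Lemma NE_star n w : 3 * n < w < 6 * n -> (3 * n, w) \in NE n.
Proof.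
move=> hw; have -> : (3 * n, w) = ne n (8 * n - w).
  rewrite /ne; ifs; try lia; congr pair; lia.
apply: inNE; lia.
Qed.

Lemma NE_cases n a b : 0 < n -> (a, b) \in NE n ->
  [\/ exists2 j, j < n & (a = j /\ b = n + j),
      exists2 j, j < n & (a = n + j /\ b = 2 * n + j),
      (a = 0 /\ b = 3 * n) |
      (a = 3 * n /\ 3 * n < b < 6 * n)].
Proof.
move=> hn /mapP [i]; rewrite mem_iota add0n => hi he.
case: (ne_cases hn hi); rewrite -he.
- move=> [j hj [-> ->]]; constructor 1; by exists j.
- move=> [j hj [-> ->]]; constructor 2; by exists j.
- move=> [-> ->]; by constructor 3.
- move=> /= [-> hb]; by constructor 4.
Qed.

Lemma uniq_NE n : uniq (NE n).
Proof.
rewrite /NE map_inj_in_uniq ?iota_uniq //.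
move=> i j; rewrite !mem_iota !add0n => hi hj he.
by rewrite -(nei_ne hi) -(nei_ne hj) he.
Qed.

Lemma size_NE n : size (NE n) = 5 * n.
Proof. by rewrite size_map size_iota. Qed.

Definition proj n z := if z < n then z else if z < 2 * n then z - n
  else if z < 3 * n then z - 2 * n else 0.
Definition hgt n z := if z < n then 0 else if z < 2 * n then 1
  else if z < 3 * n then 2 else if z == 3 * n then 1 else 2.

Lemma adj_sym G a b : adj G a b = adj G b a.
Proof. by rewrite /adj orbC. Qed.

Section Out.
Variable G : graph.
Hypothesis hs : simple_graph G.
Hypothesis hc : connected G.
Notation n := (gn G).
Notation G' := (Gout G).

Lemma n_pos : 0 < n.
Proof. by case: hc. Qed.

Lemma simple_edges e : e \in gE G -> [/\ e.1 < n, e.2 < n & e.1 != e.2].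
Proof.
move: hs => /andP [/allP h _] he; move: (h e he) => /and3P [h1 h2 h3]; by split.
Qed.

Lemma adjG_range a b : adj G a b -> [/\ a < n, b < n & a != b].
Proof.
rewrite /adj => /orP [] he; move: (simple_edges he) => /= [h1 h2 h3]; split => //.
by rewrite eq_sym.
Qed.

Lemma adj_out a b : adj G' a b = [|| adj G a b, (a, b) \in NE n | (b, a) \in NE n].
Proof.
rewrite /adj /= !mem_cat.
by case: ((a, b) \in gE G); case: ((b, a) \in gE G); case: ((a, b) \in NE n);
   case: ((b, a) \in NE n).
Qed.

Lemma NE_proj a b : (a, b) \in NE n -> proj n a = proj n b /\ hgt n b = hgt n a + 1.
Proof.
move=> h; case: (NE_cases n_pos h).
- move=> [j hj [-> ->]]; rewrite /proj /hgt; ifs; lia.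
- move=> [j hj [-> ->]]; rewrite /proj /hgt; ifs; lia.
- move=> [-> ->]; have := n_pos; rewrite /proj /hgt; ifs; lia.
- move=> [-> hb]; have := n_pos; rewrite /proj /hgt; ifs; lia.
Qed.

Lemma NE_range a b : (a, b) \in NE n -> [/\ a < 6 * n, b < 6 * n & a != b].
Proof.
move=> h; have := n_pos; case: (NE_cases n_pos h).
- move=> [j hj [-> ->]]; split; lia.
- move=> [j hj [-> ->]]; split; lia.
- move=> [-> ->]; split; lia.
- move=> [-> hb]; split; lia.
Qed.

Lemma lip_out (f : nat -> nat) :
  (forall a b, adj G a b -> f b <= f a + 1) ->
  (forall a b, (a, b) \in NE n -> f b <= f a + 1 /\ f a <= f b + 1) ->
  forall a b, adj G' a b -> f b <= f a + 1.
Proof.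
move=> h1 h2 a b; rewrite adj_out => /or3P [].
- exact: h1.
- by move/h2 => [].
- by move/h2 => [].
Qed.

Lemma adj_lift a b : adj G a b -> adj G' a b.
Proof. by rewrite adj_out => ->. Qed.

Lemma reach_out k a b : reach G k a b -> reach G' k a b.
Proof. apply: (@reach_lift G (Gout G)); [rewrite /=; lia | exact: adj_lift]. Qed.

Lemma adjNE a b : (a, b) \in NE n -> adj G' a b /\ adj G' b a.
Proof. by move=> h; rewrite !adj_out h !orbT. Qed.

Lemma r1 a b : a < 6 * n -> (a, b) \in NE n \/ (b, a) \in NE n -> reach G' 1 a b.
Proof.
move=> ha [] h; apply: reach_adj => //; by case: (adjNE h).
Qed.

Lemma walk_proj z : z < 6 * n -> reach G' 2 z (proj n z) /\ reach G' 2 (proj n z) z.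
Proof.
move=> hz; have hn := n_pos.
have hpi : proj n z < n by rewrite /proj; ifs; lia.
case: (ltnP z n) => h1.
  have -> : proj n z = z by rewrite /proj h1.
  by split; apply: (@reach_mono _ 0) => //=.
case: (ltnP z (2 * n)) => h2.
  have -> : proj n z = z - n by rewrite /proj; ifs; lia.
  have he := NE_col1 (ltac:(lia) : z - n < n); rewrite (_ : n + (z - n) = z) in he; last lia.
  split; apply: (@reach_mono _ 1) => //; apply: r1; try lia; by [right|left].
case: (ltnP z (3 * n)) => h3.
  have -> : proj n z = z - 2 * n by rewrite /proj; ifs; lia.
  have he1 := NE_col1 (ltac:(lia) : z - 2 * n < n).
  have he2 := NE_col2 (ltac:(lia) : z - 2 * n < n).
  rewrite (_ : 2 * n + (z - 2 * n) = z) in he2; last lia.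
  split.
    apply: (@reach_trans _ 1 1 _ (n + (z - 2 * n))); apply: r1; try lia; by right.
  apply: (@reach_trans _ 1 1 _ (n + (z - 2 * n))); apply: r1; try lia; by left.
have -> : proj n z = 0 by rewrite /proj; ifs; lia.
have hy := NE_y hn.
case: (eqVneq z (3 * n)) => [->|hne].
  split; apply: (@reach_mono _ 1) => //; apply: r1; try lia; by [right|left].
have hs' := NE_star (ltac:(lia) : 3 * n < z < 6 * n).
split.
  apply: (@reach_trans _ 1 1 _ (3 * n)); apply: r1; try lia; by [right|right].
apply: (@reach_trans _ 1 1 _ (3 * n)); apply: r1; try lia; by [left|left].
Qed.

Definition D := diameter G.

Lemma dist_ltn u v : u < n -> v < n -> reach G (dist G u v) u v /\ dist G u v < n.
Proof.
move=> hu hv; have hn := n_pos.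
have hr : reach G n.-1 u v by exact: (reach_shorten hu hv (proj2 hc u v hu hv)).
split; first by apply: (dist_reach hr); lia.
have := dist_le hr; lia.
Qed.

Lemma dist_D u v : u < n -> v < n -> dist G u v <= D.
Proof.
move=> hu hv.
apply: leq_trans (leq_bigmax (Ordinal hu)).
exact: (leq_bigmax (F := fun v : 'I_n => dist G u v) (Ordinal hv)).
Qed.

Lemma D_lt : D < n.
Proof.
have hn := n_pos.
have : D <= n.-1.
  apply/bigmax_leqP => u _; apply/bigmax_leqP => v _.
  have [_ h] := dist_ltn (ltn_ord u) (ltn_ord v); lia.
lia.
Qed.

Lemma upper a b : a < 6 * n -> b < 6 * n -> reach G' (2 + D + 2) a b.
Proof.
move=> ha hb.
have [ha1 _] := walk_proj ha; have [_ hb2] := walk_proj hb.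
have hpa : proj n a < n by rewrite /proj; ifs; lia.
have hpb : proj n b < n by rewrite /proj; ifs; lia.
have [hr _] := dist_ltn hpa hpb.
apply: reach_trans hb2; apply: reach_trans ha1 _.
apply: reach_out; apply: reach_mono hr; exact: dist_D.
Qed.

End Out.

Lemma bigmin_le (I : eqType) (r : seq I) (P : pred I) (F : I -> nat) x i0 :
  i0 \in r -> P i0 -> \big[minn/x]_(i <- r | P i) F i <= F i0.
Proof.
elim: r => [|y r IH] //; rewrite inE big_cons => /orP [/eqP <-|hi] hp.
  by rewrite hp geq_minl.
case: (P y); last exact: IH.
apply: leq_trans (geq_minr _ _) _; exact: IH.
Qed.

Lemma card_ge N k : #|[set i : 'I_N | k <= i]| = N - k.
Proof.
rewrite cardsE cardE /enum_mem -enumT /= size_filter.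
have -> : count (mem [pred i : 'I_N | k <= i]) (enum 'I_N) =
          count (fun i => k <= i) (map val (enum 'I_N)).
  by rewrite count_map.
rewrite val_enum_ord.
case: (leqP k N) => hk.
  rewrite -(subnKC hk) iotaD count_cat add0n.
  rewrite (@eq_in_count _ _ pred0 (iota 0 k)); last first.
    move=> x; rewrite mem_iota /= => h; apply/negbTE; rewrite -ltnNge; lia.
  rewrite count_pred0 (@eq_in_count _ _ predT); last first.
    by move=> x; rewrite mem_iota /= => h; lia.
  rewrite count_predT size_iota; lia.
rewrite (@eq_in_count _ _ pred0); last first.
  move=> x; rewrite mem_iota /= => h; apply/negbTE; rewrite -ltnNge; lia.
by rewrite count_pred0; lia.
Qed.

Section Main.
Variable G : graph.
Hypothesis hs : simple_graph G.
Hypothesis hc : connected G.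
Notation n := (gn G).
Notation G' := (Gout G).

Lemma dist_self u : dist G u u = 0.
Proof. apply/eqP; rewrite -leqn0; apply: (@dist_le _ 0); exact: eqxx. Qed.

Lemma dist_adj_lip u x y : u < n -> adj G x y -> dist G u y <= dist G u x + 1.
Proof.
move=> hu hxy; have [hx hy _] := adjG_range hs hxy.
have [hr _] := dist_ltn hs hc hu hx.
apply: dist_le; apply: reach_trans hr _; exact: reach_adj.
Qed.

Lemma ex_D : exists2 u, u < n & exists2 v, v < n & dist G u v = D G.
Proof.
have hn := n_pos hc.
rewrite /D /diameter (bigmax_eq_arg (Ordinal hn)) //.
set u0 := [arg max_(i > Ordinal hn) _].
rewrite (bigmax_eq_arg (Ordinal hn)) //.
set v0 := [arg max_(i > Ordinal hn) _].
exists u0 => //; by exists v0.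
Qed.

Lemma lower : exists a b, [/\ a < 6 * n, b < 6 * n &
   forall k, reach G' k a b -> D G + 4 <= k].
Proof.
have hn := n_pos hc.
case: (posnP (D G)) => hD.
  exists (2 * n), (3 * n + 1); split; try lia.
  pose f z := if z < 3 * n then 2 - hgt n z else hgt n z + 2.
  have hl1 : forall a b, adj G a b -> f b <= f a + 1.
    move=> a b /(adjG_range hs) [] ha hb _; rewrite /f /hgt; ifs; lia.
  have hl2 : forall a b, (a, b) \in NE n -> f b <= f a + 1 /\ f a <= f b + 1.
    move=> a b hab; case: (NE_cases hn hab).
    + move=> [j hj [-> ->]]; rewrite /f /hgt; ifs; lia.
    + move=> [j hj [-> ->]]; rewrite /f /hgt; ifs; lia.
    + move=> [-> ->]; rewrite /f /hgt; ifs; lia.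
    + move=> [-> hb]; rewrite /f /hgt; ifs; lia.
  move=> k hk.
  have := reach_lip (lip_out hl1 hl2) hk.
  rewrite /f /hgt; ifs; lia.
have [u0 hu0 [v0 hv0 huv]] := ex_D.
have hne : u0 != v0.
  apply/negP => /eqP e; subst v0; rewrite dist_self in huv; lia.
exists (2 * n + u0), (2 * n + v0); split; try lia.
pose g z := if proj n z == u0 then 2 - hgt n z else 2 + dist G u0 (proj n z) + hgt n z.
have hl1 : forall a b, adj G a b -> g b <= g a + 1.
  move=> a b hab; have [ha hb hab'] := adjG_range hs hab.
  rewrite /g.
  have -> : proj n a = a by rewrite /proj ha.
  have -> : proj n b = b by rewrite /proj hb.
  have -> : hgt n a = 0 by rewrite /hgt ha.
  have -> : hgt n b = 0 by rewrite /hgt hb.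
  case: (eqVneq a u0) => [ea|na].
    subst a; have hb0 : (b == u0) = false by apply/negbTE; rewrite eq_sym.
    rewrite hb0.
    have := dist_adj_lip hu0 hab; rewrite dist_self; lia.
  case: (eqVneq b u0) => [eb|nb] //=.
  have := dist_adj_lip hu0 hab; lia.
have hl2 : forall a b, (a, b) \in NE n -> g b <= g a + 1 /\ g a <= g b + 1.
  move=> a b /(NE_proj hs hc) [] hp hh; rewrite /g hp.
  have : hgt n a <= 2 by rewrite /hgt; ifs; lia.
  case: (proj n b == u0); lia.
move=> k hk.
have := reach_lip (lip_out hl1 hl2) hk.
rewrite /g.
have -> : proj n (2 * n + u0) = u0 by rewrite /proj; ifs; lia.
have -> : proj n (2 * n + v0) = v0 by rewrite /proj; ifs; lia.
have hb0 : (v0 == u0) = false by apply/negbTE; rewrite eq_sym.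
rewrite eqxx hb0 huv.
rewrite /hgt; ifs; lia.
Qed.

Lemma diam_out : diameter G' = D G + 4.
Proof.
have hn := n_pos hc; have hD := D_lt hs hc.
apply/eqP; rewrite eqn_leq; apply/andP; split.
  apply/bigmax_leqP => a _; apply/bigmax_leqP => b _.
  have := dist_le (upper hs hc (ltn_ord a) (ltn_ord b)); lia.
have [a [b [ha hb hl]]] := lower.
have hr := upper hs hc ha hb.
have hr' := dist_reach hr ltac:(rewrite /=; lia).
apply: leq_trans (hl _ hr') _.
apply: leq_trans (leq_bigmax (Ordinal ha)).
exact: (leq_bigmax (F := fun v : 'I_(6 * n) => dist G' a v) (Ordinal hb)).
Qed.

Lemma conn_out : connected G'.
Proof.
have hn := n_pos hc; have hD := D_lt hs hc.
split => /=; first lia.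
move=> u v hu hv; apply: reach_mono (upper hs hc hu hv); lia.
Qed.

Lemma simple_out : simple_graph G'.
Proof.
have hn := n_pos hc.
apply/andP; split.
  apply/allP => [[a b]]; rewrite mem_cat => /orP [] he /=.
    have [/= h1 h2 h3] := simple_edges hs he; apply/and3P; split => //; lia.
  have [h1 h2 h3] := NE_range hs hc he; by apply/and3P; split.
move: hs => /andP [_ hu].
rewrite map_cat cat_uniq hu /=.
have -> : [seq (minn e.1 e.2, maxn e.1 e.2) | e <- NE n] = NE n.
  rewrite -{2}(map_id (NE n)); apply/eq_in_map => [[a b]] he /=.
  have : a < b by case: (NE_cases hn he) => [[j _ [e1 e2]]|[j _ [e1 e2]]|[e1 e2]|[e1 e2]]; lia.
  move=> hab; congr pair; lia.
rewrite uniq_NE andbT; apply/hasPn => [[a b]] he; apply/negP => /mapP [[x y] hxy [ea eb]].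
have [/= h1 h2 _] := simple_edges hs hxy.
have : n <= b by case: (NE_cases hn he) => [[j _ [e1 e2]]|[j _ [e1 e2]]|[e1 e2]|[e1 e2]]; lia.
move: eb => /= ->; lia.
Qed.

Lemma mindeg_out : min_degree G' <= 1.
Proof.
have hn := n_pos hc.
have hl : 3 * n + 1 < 6 * n by lia.
apply: leq_trans (bigmin_le _ _ (i0 := Ordinal hl) (mem_index_enum _) (erefl true)) _.
rewrite /degree /=.
apply: leq_trans (count_le_in (q := pred1 (3 * n)) _) _.
  move=> b _ /=; rewrite adj_out => /or3P [].
  - by move/(adjG_range hs) => [] h; lia.
  - by move=> h; case: (NE_cases hn h) => [[j hj [e1 e2]]|[j hj [e1 e2]]|[e1 e2]|[e1 e2]]; lia.
  - move=> h; case: (NE_cases hn h) => [[j hj [e1 e2]]|[j hj [e1 e2]]|[e1 e2]|[e1 e2]];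
      try lia; by apply/eqP.
rewrite count_uniq_mem ?iota_uniq //; by case: (_ \in _).
Qed.

Definition Aset : {set 'I_(gn G')} := [set i : 'I_(gn G') | 3 * n <= i].

Lemma inA_out x : inA Aset x = (3 * n <= x) && (x < 6 * n).
Proof.
apply/existsP/andP => [[i /andP [hi /eqP <-]]|[h1 h2]].
  by move: hi; rewrite inE => ->; split => //; exact: (ltn_ord i).
exists (Ordinal (h2 : x < gn G')); by rewrite inE /= h1 eqxx.
Qed.

Lemma bw_out : bisection_width G' <= 1.
Proof.
have hn := n_pos hc.
have hbal : balanced Aset.
  rewrite /balanced /Aset card_ge /=; apply/orP; left; apply/eqP.
  have -> : 6 * n = (3 * n).*2 by lia.
  rewrite doubleK; lia.
apply: leq_trans (bigmin_le _ _ (i0 := Aset) (mem_index_enum _) hbal) _.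
rewrite /cut /= count_cat.
have -> : count (fun e => inA Aset e.1 != inA Aset e.2) (gE G) = 0.
  apply/eqP; rewrite -leqn0; apply: leq_trans (count_le_in (q := pred0) _) _.
    move=> [a b] he /=; have [/= h1 h2 _] := simple_edges hs he.
    rewrite !inA_out.
    have -> : (3 * n <= a) = false by apply/negbTE; rewrite -ltnNge; lia.
    have -> : (3 * n <= b) = false by apply/negbTE; rewrite -ltnNge; lia.
    by [].
  by rewrite count_pred0.
rewrite add0n /NE count_map.
apply: leq_trans (count_le_in (q := pred1 (2 * n)) _) _.
  move=> i; rewrite mem_iota add0n => hi /=.
  case: (ne_cases hn hi) => [[j hj ->]|[j hj ->]|e|[e1 e2]]; rewrite /= ?inA_out.
  - have -> : (3 * n <= j) = false by apply/negbTE; rewrite -ltnNge; lia.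
    have -> : (3 * n <= n + j) = false by apply/negbTE; rewrite -ltnNge; lia.
    by [].
  - have -> : (3 * n <= n + j) = false by apply/negbTE; rewrite -ltnNge; lia.
    have -> : (3 * n <= 2 * n + j) = false by apply/negbTE; rewrite -ltnNge; lia.
    by [].
  - move=> _; apply/eqP; by rewrite -(nei_ne hi) e /nei /=; ifs; lia.
  - rewrite e1.
    have -> : (3 * n <= 3 * n) && (3 * n < 6 * n) by apply/andP; split; lia.
    have -> : (3 * n <= (ne n i).2) && ((ne n i).2 < 6 * n) by apply/andP; split; lia.
    by [].
rewrite count_uniq_mem ?iota_uniq //; by case: (_ \in _).
Qed.

End Main.

Definition prog : seq instr := [::
  IJZ 1 157;
  IADD 2 2 1;
  IADD 2 2 1;
  IADD 2 2 0;
  IADD 2 2 0;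
  IADD 2 2 0;
  IADD 2 2 0;
  IADD 2 2 0;
  IADD 2 2 0;
  IADD 2 2 0;
  IADD 2 2 0;
  IADD 2 2 0;
  IADD 2 2 0;
  IADD 2 2 0;
  IADD 2 2 0;
  IADD 2 2 0;
  IADD 2 2 0;
  IADD 2 2 0;
  IADD 2 2 0;
  IADD 2 2 0;
  IADD 2 2 0;
  IADD 2 2 0;
  IADD 2 2 0;
  ISTORE 2 1;
  IADD 1 2 0;
  ISTORE 1 3;
  IADD 1 1 0;
  ISTORE 1 4;
  ICONST 4 3;
  ILOAD 1 2;
  IADD 4 4 1;
  IADD 4 4 1;
  IADD 4 4 0;
  IADD 4 4 0;
  IADD 4 4 0;
  IADD 4 4 0;
  IADD 4 4 0;
  IADD 4 4 0;
  IADD 4 4 0;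
  IADD 4 4 0;
  IADD 4 4 0;
  IADD 4 4 0;
  ICONST 1 1;
  IADD 3 2 0;
  ILOAD 3 3;
  IADD 4 4 1;
  ISTORE 4 3;
  IADD 3 2 0;
  IADD 3 3 0;
  ILOAD 3 3;
  IADD 4 4 1;
  ISTORE 4 3;
  IADD 4 4 1;
  IADD 3 0 0;
  IADD 3 3 0;
  IADD 3 3 0;
  IADD 3 3 0;
  IADD 3 3 0;
  ISTORE 4 3;
  ISUB 3 4 1;
  ISUB 3 3 1;
  ISUB 3 3 1;
  ISTORE 3 4;
  ILOAD 1 2;
  ISUB 2 2 1;
  ISUB 2 2 1;
  ISUB 2 2 0;
  ISUB 2 2 0;
  ISUB 2 2 0;
  ISUB 2 2 0;
  ISUB 2 2 0;
  ISUB 2 2 0;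
  ISUB 2 2 0;
  ISUB 2 2 0;
  ISUB 2 2 0;
  ISUB 2 2 0;
  ISUB 2 2 0;
  ISUB 2 2 0;
  ISUB 2 2 0;
  ISUB 2 2 0;
  ISUB 2 2 0;
  ISUB 2 2 0;
  ISUB 2 2 0;
  ISUB 2 2 0;
  ISUB 2 2 0;
  ISUB 2 2 0;
  ICONST 4 4;
  IADD 2 2 4;
  IADD 1 1 0;
  IADD 1 1 0;
  IADD 1 1 0;
  IADD 1 1 0;
  IADD 1 1 0;
  IADD 4 3 3;
  ISTORE 4 2;
  ICONST 2 3;
  IADD 4 4 2;
  ISTORE 4 1;
  ISUB 2 3 0;
  ISUB 2 2 0;
  ISUB 2 2 0;
  ISUB 2 2 0;
  ISUB 2 2 0;
  ISUB 2 2 0;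
  ISUB 2 2 0;
  ISUB 2 2 0;
  ISUB 2 2 0;
  ISUB 2 2 0;
  ICONST 4 1;
  ISUB 1 0 4;
  IADD 3 1 0;
  IADD 0 3 0;
  ICONST 4 1;
  ISTORE 2 1;
  IADD 2 2 4;
  ISTORE 2 3;
  IADD 2 2 4;
  ISTORE 2 3;
  IADD 2 2 4;
  ISTORE 2 0;
  IADD 2 2 4;
  IJZ 1 127;
  ISUB 1 1 4;
  ISUB 3 3 4;
  ISUB 0 0 4;
  ISUB 4 4 4;
  IJZ 4 112;
  ISTORE 2 1;
  IADD 2 2 4;
  IADD 3 3 0;
  ISTORE 2 3;
  IADD 2 2 4;
  IADD 1 3 3;
  ISUB 1 1 4;
  ISUB 0 3 4;
  ICONST 4 1;
  ISTORE 2 3;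
  IADD 2 2 4;
  ISTORE 2 1;
  IADD 2 2 4;
  ISUB 0 0 4;
  IJZ 0 145;
  ISUB 1 1 4;
  ISUB 4 4 4;
  IJZ 4 135;
  ICONST 3 1;
  IADD 0 2 3;
  IADD 4 0 3;
  ILOAD 4 4;
  ILOAD 3 0;
  ILOAD 0 2;
  IADD 1 2 0;
  ILOAD 1 1;
  ILOAD 0 0;
  IADD 2 2 2;
  ILOAD 2 2;
  IHALT;
  ICONST 3 0;
  ICONST 4 1;
  ICONST 5 1;
  ICONST 6 2;
  ICONST 7 0;
  ICONST 8 3;
  ICONST 9 3;
  ICONST 10 5;
  ICONST 11 3;
  ICONST 12 4;
  ICONST 0 6;
  ICONST 1 5;
  ICONST 13 4;
  IADD 2 2 13;
  IHALT].

Fixpoint steps (W : nat) (P : seq instr) (k pc : nat) (M : memory) : option (nat * memory) :=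
  match k with
  | 0 => Some (pc, M)
  | k'.+1 => match step W P pc M with
             | ONext pc' M' => steps W P k' pc' M'
             | _ => None
             end
  end.

Lemma steps_S W P k pc M : steps W P k.+1 pc M =
  match step W P pc M with ONext pc' M' => steps W P k pc' M' | _ => None end.
Proof. by []. Qed.

Lemma steps_0 W P pc M : steps W P 0 pc M = Some (pc, M).
Proof. by []. Qed.

Lemma steps_add W P a b pc M :
  steps W P (a + b) pc M = match steps W P a pc M with
                           | Some (pc', M') => steps W P b pc' M' | None => None end.
Proof.
elim: a pc M => [|a IH] pc M //=.
case: (step W P pc M) => // pc' M'; exact: IH.
Qed.

Lemma run_steps W P k fuel pc M pc' M' :
  steps W P k pc M = Some (pc', M') -> nth IHALT P pc' = IHALT -> k < fuel ->
  run W P fuel pc M = Some M'.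
Proof.
elim: k fuel pc M => [|k IH] [|f] pc M //=.
  by move=> [<- <-] h _; rewrite /step h.
case: (step W P pc M) => // pc1 M1 hs hh hk.
exact: IH hs hh hk.
Qed.

Arguments steps : simpl never.
Arguments step : simpl never.

Definition mem5 (r0 r1 r2 r3 r4 : nat) (h : memory) : memory := fun a =>
  match a with 0 => r0 | 1 => r1 | 2 => r2 | 3 => r3 | 4 => r4 | _ => h a end.

Lemma mem5_h r0 r1 r2 r3 r4 h a : 4 < a -> mem5 r0 r1 r2 r3 r4 h a = h a.
Proof. by case: a => [|[|[|[|[|a]]]]]. Qed.

Lemma upd5_0 r0 r1 r2 r3 r4 h x : upd (mem5 r0 r1 r2 r3 r4 h) 0 x = mem5 x r1 r2 r3 r4 h.
Proof. apply: functional_extensionality => a; by case: a => [|[|[|[|[|a]]]]]. Qed.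
Lemma upd5_1 r0 r1 r2 r3 r4 h x : upd (mem5 r0 r1 r2 r3 r4 h) 1 x = mem5 r0 x r2 r3 r4 h.
Proof. apply: functional_extensionality => a; by case: a => [|[|[|[|[|a]]]]]. Qed.
Lemma upd5_2 r0 r1 r2 r3 r4 h x : upd (mem5 r0 r1 r2 r3 r4 h) 2 x = mem5 r0 r1 x r3 r4 h.
Proof. apply: functional_extensionality => a; by case: a => [|[|[|[|[|a]]]]]. Qed.
Lemma upd5_3 r0 r1 r2 r3 r4 h x : upd (mem5 r0 r1 r2 r3 r4 h) 3 x = mem5 r0 r1 r2 x r4 h.
Proof. apply: functional_extensionality => a; by case: a => [|[|[|[|[|a]]]]]. Qed.
Lemma upd5_4 r0 r1 r2 r3 r4 h x : upd (mem5 r0 r1 r2 r3 r4 h) 4 x = mem5 r0 r1 r2 r3 x h.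
Proof. apply: functional_extensionality => a; by case: a => [|[|[|[|[|a]]]]]. Qed.
Lemma upd5_h r0 r1 r2 r3 r4 h a x : 4 < a ->
  upd (mem5 r0 r1 r2 r3 r4 h) a x = mem5 r0 r1 r2 r3 r4 (upd h a x).
Proof.
move=> ha; apply: functional_extensionality => b; rewrite /upd.
case: (eqVneq b a) => [->|hb]; first by rewrite mem5_h //= eqxx.
case: b hb => [|[|[|[|[|b]]]]] hb /=; rewrite ?(negbTE hb) //.
Qed.

Lemma nth_prog_eq pc i : nth IHALT prog pc = i -> nth IHALT prog pc = i.
Proof. by []. Qed.

Lemma upd_app M a x b : upd M a x b = if b == a then x else M b.
Proof. by []. Qed.
Arguments upd : simpl never.

Ltac dec_eq := repeat match goal with
  | |- context [?a == ?b] =>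
      (rewrite (_ : (a == b) = true); last by apply/eqP; lia) ||
      (rewrite (_ : (a == b) = false); last by apply/negbTE; apply/eqP; lia)
  end.

Ltac fix_mem :=
  repeat match goal with
  | |- context [mem5 ?r0 ?r1 ?r2 ?r3 ?r4 ?h ?e] =>
     rewrite (@mem5_h r0 r1 r2 r3 r4 h e); last lia
  end.

Ltac fix_upd :=
  repeat (first [ rewrite upd5_0 | rewrite upd5_1 | rewrite upd5_2 | rewrite upd5_3
                | rewrite upd5_4 | (rewrite upd5_h; last lia)]).

Lemma addnn_2 x n : x + n + n = x + 2 * n.
Proof. lia. Qed.
Lemma addn_kS x k n : x + k * n + n = x + k.+1 * n.
Proof. lia. Qed.
Lemma subn_2 x n : x - n - n = x - 2 * n.
Proof. lia. Qed.
Lemma subn_kS x k n : x - k * n - n = x - k.+1 * n.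
Proof. lia. Qed.

Ltac norm := repeat (first [rewrite addn_kS | rewrite addnn_2 | rewrite subn_kS | rewrite subn_2]).

Lemma mem5_0 r0 r1 r2 r3 r4 h : mem5 r0 r1 r2 r3 r4 h 0 = r0. Proof. by []. Qed.
Lemma mem5_1 r0 r1 r2 r3 r4 h : mem5 r0 r1 r2 r3 r4 h 1 = r1. Proof. by []. Qed.
Lemma mem5_2 r0 r1 r2 r3 r4 h : mem5 r0 r1 r2 r3 r4 h 2 = r2. Proof. by []. Qed.
Lemma mem5_3 r0 r1 r2 r3 r4 h : mem5 r0 r1 r2 r3 r4 h 3 = r3. Proof. by []. Qed.
Lemma mem5_4 r0 r1 r2 r3 r4 h : mem5 r0 r1 r2 r3 r4 h 4 = r4. Proof. by []. Qed.

Lemma write_ok W pc M a x : x <= W -> write W pc M a x = ONext pc.+1 (upd M a x).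
Proof. by rewrite /write => ->. Qed.

Ltac stpH WB tac :=
  rewrite steps_S;
  match goal with |- context [step ?W prog ?pc ?M] =>
    let i := eval vm_compute in (nth IHALT prog pc) in
    rewrite /step (_ : nth IHALT prog pc = i); last reflexivity
  end;
  cbv iota beta;
  rewrite ?mem5_0 ?mem5_1 ?mem5_2 ?mem5_3 ?mem5_4; norm; fix_mem; rewrite ?upd_app; tac; dec_eq;
  cbv iota beta;
  try (rewrite write_ok; last (apply: WB; lia));
  cbv iota beta; fix_upd; norm.

Ltac stp WB := stpH WB idtac.

Section PA.
Variables (W n m t s3 s4 : nat) (h : memory).
Hypothesis hW : forall x, x <= 25 * (n + m + t + 2) -> x <= W.
Hypothesis hn : 2 <= n.
Hypothesis hm : 1 <= m.
Hypothesis hs3 : s3 < n.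
Hypothesis hs4 : s4 < n.

Definition EE := 3 + 2 * m + 10 * n.

Lemma phaseA : exists hA,
  steps W prog 112 0 (mem5 n m t s3 s4 h) =
    Some (112, mem5 (3 * n - 1) (n - 1) (3 + 2 * m) (2 * n - 1) 1 hA) /\
  [/\ forall a, 4 < a -> a < EE -> hA a = h a,
      hA EE = EE + 3, hA (EE + 1) = s3, hA (EE + 2) = s4 &
      [/\ hA (EE + 3) = 6 * n, hA (2 * EE) = t + 4 & hA (2 * EE + 3) = m + 5 * n]].
Proof.
do 112 stp hW.
eexists; split.
  congr (Some (_, mem5 _ _ _ _ _ _)); lia.
rewrite /EE; split; [move=> a ha1 ha2| | | |split]; rewrite ?upd_app; dec_eq; lia.
Qed.
End PA.

Definition outv n o := if o %% 2 == 0 then (ne n (o %/ 2)).1 else (ne n (o %/ 2)).2.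

Section L1.
Variables (W n m t : nat) (hA : memory).
Hypothesis hW : forall x, x <= 25 * (n + m + t + 2) -> x <= W.
Hypothesis hn : 2 <= n.
Hypothesis hm : 1 <= m.
Notation P0 := (3 + 2 * m).

Definition inv1 r (h : memory) := forall a, 4 < a ->
  h a = if (P0 <= a) && (a < P0 + 4 * r) then outv n (a - P0) else hA a.

Lemma loop1 d : forall r z x p y q h, r + d = n - 1 ->
  z = 3 * n - 1 - r -> x = n - 1 - r -> p = P0 + 4 * r -> y = 2 * n - 1 - r ->
  inv1 r h ->
  exists h', steps W prog (15 * d + 10) 112 (mem5 z x p y q h) =
     Some (127, mem5 (2 * n) 0 (P0 + 4 * n) n 1 h') /\ inv1 n h'.
Proof.
elim: d => [|d IH] r z x p y q h hrd -> -> -> -> hinv.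
  do 10 stp hW.
  eexists; split.
    congr (Some (_, mem5 _ _ _ _ _ _)); lia.
  move=> a ha; rewrite !upd_app hinv //; rewrite /outv /ne; ifs; lia.
rewrite (_ : 15 * d.+1 + 10 = 15 + (15 * d + 10)); last lia.
rewrite steps_add.
do 15 stp hW. rewrite steps_0.
apply: (IH r.+1); try lia.
move=> a ha; rewrite !upd_app hinv //; rewrite /outv /ne; ifs; lia.
Qed.

Definition inv2 r (h : memory) := forall a, 4 < a ->
  h a = if (P0 <= a) && (a < P0 + 4 * n + 2 + 2 * r) then outv n (a - P0) else hA a.

Lemma phaseB h : inv1 n h -> exists h',
  steps W prog 8 127 (mem5 (2 * n) 0 (P0 + 4 * n) n 1 h) =
    Some (135, mem5 (3 * n - 1) (6 * n - 1) (P0 + 4 * n + 2) (3 * n) 1 h') /\ inv2 0 h'.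
Proof.
move=> hinv.
do 8 stp hW.
eexists; split.
  rewrite steps_0; congr (Some (_, mem5 _ _ _ _ _ _)); lia.
move=> a ha; rewrite !upd_app hinv //; rewrite /outv /ne; ifs; lia.
Qed.

Lemma loop2 d : forall r k w p q h, r + d = 3 * n - 2 ->
  k = 3 * n - 1 - r -> w = 6 * n - 1 - r -> p = P0 + 4 * n + 2 + 2 * r ->
  inv2 r h ->
  exists h', steps W prog (10 * d + 7) 135 (mem5 k w p (3 * n) q h) =
     Some (145, mem5 0 (3 * n + 1) (P0 + 10 * n) (3 * n) 1 h') /\ inv2 (3 * n - 1) h'.
Proof.
elim: d => [|d IH] r k w p q h hrd -> -> -> hinv.
  do 7 stp hW.
  eexists; split.
    rewrite steps_0; congr (Some (_, mem5 _ _ _ _ _ _)); lia.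
  move=> a ha; rewrite !upd_app hinv //; rewrite /outv /ne; ifs; lia.
rewrite (_ : 10 * d.+1 + 7 = 10 + (10 * d + 7)); last lia.
rewrite steps_add.
do 10 stp hW. rewrite steps_0.
apply: (IH r.+1); try lia.
move=> a ha; rewrite !upd_app hinv //; rewrite /outv /ne; ifs; lia.
Qed.

Variables s3 s4 : nat.
Hypothesis hs3 : s3 < n.
Hypothesis hs4 : s4 < n.
Notation EE := (P0 + 10 * n).

Lemma phaseC h :
  (forall e, e = EE -> h e = EE + 3) ->
  (forall e, e = EE + 1 -> h e = s3) ->
  (forall e, e = EE + 2 -> h e = s4) ->
  (forall e, e = EE + 3 -> h e = 6 * n) ->
  (forall e, e = 2 * EE -> h e = t + 4) ->
  (forall e, e = 2 * EE + 3 -> h e = m + 5 * n) ->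
  steps W prog 11 145 (mem5 0 (3 * n + 1) EE (3 * n) 1 h) =
    Some (156, mem5 (6 * n) (m + 5 * n) (t + 4) s3 s4 h).
Proof.
move=> h1 h2 h3 h4 h5 h6.
do 11 stpH hW ltac:(repeat match goal with |- context [h ?e] =>
   first [rewrite (h1 e); last lia | rewrite (h2 e); last lia | rewrite (h3 e); last lia
         | rewrite (h4 e); last lia | rewrite (h5 e); last lia | rewrite (h6 e); last lia]
   end).
rewrite steps_0; congr (Some (_, mem5 _ _ _ _ _ _)); lia.
Qed.

End L1.

Lemma special W t s3 s4 h :
  (forall x, x <= 25 * (1 + 0 + t + 2) -> x <= W) ->
  exists M, steps W prog 15 0 (mem5 1 0 t s3 s4 h) = Some (171, M) /\
    decode_graph M = Graph 6 [:: (0, 1); (1, 2); (0, 3); (3, 5); (3, 4)] /\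
    decode_t M = t + 4.
Proof.
move=> hW.
do 15 stp hW.
eexists; split; first by rewrite steps_0.
split; last by [].
rewrite /decode_graph /=.
by rewrite !upd_app.
Qed.

Lemma NE1 : NE 1 = [:: (0, 1); (1, 2); (0, 3); (3, 5); (3, 4)].
Proof. by []. Qed.

Lemma init_mem5 G t : init_mem G t =
  mem5 (gn G) (gm G) t (init_mem G t 3) (init_mem G t 4) (init_mem G t).
Proof. apply: functional_extensionality => a; by case: a => [|[|[|[|[|a]]]]]. Qed.

Lemma init_edge G t i : i < gm G ->
  init_mem G t (3 + 2 * i) = (nth (0, 0) (gE G) i).1 /\
  init_mem G t (4 + 2 * i) = (nth (0, 0) (gE G) i).2.
Proof.
move=> hi; rewrite /init_mem.
have -> : (3 + 2 * i == 0) = false by apply/negbTE; apply/eqP; lia.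
have -> : (3 + 2 * i == 1) = false by apply/negbTE; apply/eqP; lia.
have -> : (3 + 2 * i == 2) = false by apply/negbTE; apply/eqP; lia.
have -> : (4 + 2 * i == 0) = false by apply/negbTE; apply/eqP; lia.
have -> : (4 + 2 * i == 1) = false by apply/negbTE; apply/eqP; lia.
have -> : (4 + 2 * i == 2) = false by apply/negbTE; apply/eqP; lia.
have -> : 3 + 2 * i - 3 = (false + i.*2) by rewrite /=; lia.
have -> : 4 + 2 * i - 3 = (true + i.*2) by rewrite /=; lia.
rewrite !half_bit_double hi.
by rewrite /= odd_double.
Qed.

Lemma m0_n1 G : connected G -> gm G = 0 -> gn G = 1.
Proof.
move=> [hn hc] hm.
have he : gE G = [::] by apply/size0nil.
case: (leqP (gn G) 1) => h; first lia.
have hr : forall k u v, reach G k u v = (u == v).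
  elim => [|k IH] u v //=; rewrite IH.
  rewrite (@eq_in_has _ _ pred0) ?has_pred0 ?orbF // => w _.
  by rewrite /adj he /= andbF.
have := hc 0 1 ltac:(lia) h; by rewrite hr.
Qed.

Lemma wbound n m t : 1 <= n -> forall x, x <= 25 * (n + m + t + 2) -> x <= (n + m + t + 2) ^ 200.
Proof.
move=> hn x hx; set N := n + m + t + 2 in hx *.
have hN : 3 <= N by rewrite /N; lia.
apply: leq_trans hx _.
apply: leq_trans (_ : N ^ 4 <= N ^ 200); last by apply: leq_pexp2l => //; lia.
rewrite !expnS expn0 muln1.
have h27 : 27 <= N * (N * N) by have := leq_mul (leq_mul hN hN) hN; rewrite -!mulnA.
rewrite [N * (N * (N * N))]mulnC; apply: leq_mul; lia.
Qed.

Lemma outv_even n i : outv n (2 * i) = (ne n i).1.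
Proof.
rewrite /outv (_ : (2 * i) %% 2 == 0 = true); last by apply/eqP; lia.
by rewrite (_ : (2 * i) %/ 2 = i); last lia.
Qed.

Lemma outv_odd n i : outv n (2 * i + 1) = (ne n i).2.
Proof.
rewrite /outv (_ : (2 * i + 1) %% 2 == 0 = false); last by apply/negbTE; apply/eqP; lia.
by rewrite (_ : (2 * i + 1) %/ 2 = i); last lia.
Qed.

Lemma prog_correct G t : simple_graph G -> connected G ->
  exists M, run ((gn G + gm G + t + 2) ^ 200) prog (200 * (gn G + gm G + 1)) 0 (init_mem G t)
    = Some M /\ decode_graph M = Gout G /\ decode_t M = t + 4.
Proof.
move=> hs hc.
have hn := n_pos hc.
have hW := @wbound (gn G) (gm G) t hn.
move: ((gn G + gm G + t + 2) ^ 200) hW => W hW.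
rewrite init_mem5.
case: (posnP (gm G)) => hm.
  have hn1 := m0_n1 hc hm.
  have hE : gE G = [::] by apply/size0nil.
  move: hW; rewrite hn1 hm => hW.
  have [M [hst [hd ht]]] := special (init_mem G t 3) (init_mem G t 4) (init_mem G t) hW.
  exists M; split; last split => //.
    apply: (run_steps hst); [vm_compute; reflexivity | lia].
  by rewrite hd /Gout hn1 hE NE1.
set n := gn G in hn hW *; set m := gm G in hm hW *.
set s3 := init_mem G t 3; set s4 := init_mem G t 4; set h0 := init_mem G t.
have [e1 e2] := init_edge t hm; rewrite addn0 in e1 e2.
have he0 : nth (0, 0) (gE G) 0 \in gE G by apply: mem_nth.
have [hx hy hxy] := simple_edges hs he0.
have hs3 : s3 < n by rewrite /s3 e1.
have hs4 : s4 < n by rewrite /s4 e2.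
have hn2 : 2 <= n.
  move: hx hy hxy; case: (nth (0, 0) (gE G) 0) => a b /= ha hb hab.
  case: (leqP 2 n) => //= h2; have ha0 : a = 0 by lia. have hb0 : b = 0 by lia.
  by move: hab; rewrite ha0 hb0.
have [hA [stA [hA1 hA2 hA3 hA4 [hA5 hA6 hA7]]]] := phaseA h0 hW hn2 hm hs3 hs4.
have [h1 [st1 inv1h]] := @loop1 W n m t hA hW hn2 hm (n - 1) 0 _ _ _ _ 1 hA
   ltac:(lia) erefl erefl erefl erefl ltac:(move=> a ha; case: ifP => // /andP [? ?]; lia).
rewrite ?subn0 ?addn0 ?muln0 in st1.
have [h1' [stB inv2h]] := @phaseB W n m t hA hW hn2 hm h1 inv1h.
have [h2 [st2 inv2h2]] := @loop2 W n m t hA hW hn2 hm (3 * n - 2) 0 _ _ _ 1 h1'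
   ltac:(lia) erefl erefl erefl inv2h.
rewrite ?subn0 ?muln0 ?addn0 in st2.
have hC := @phaseC W n m t hW hn2 hm s3 s4 hs3 hs4 h2.
have hh2 : forall a, 3 + 2 * m + 10 * n <= a -> h2 a = hA a.
  move=> a ha; rewrite inv2h2; last lia.
  rewrite (_ : (3 + 2 * m <= a) && (a < 3 + 2 * m + 4 * n + 2 + 2 * (3 * n - 1)) = false) //.
  apply/negbTE; apply/negP => /andP [_ h]; lia.
rewrite /EE in hA2 hA3 hA4 hA5 hA6 hA7.
have stC := hC ltac:(move=> e ->; rewrite hh2; [exact: hA2 | lia])
               ltac:(move=> e ->; rewrite hh2; [exact: hA3 | lia])
               ltac:(move=> e ->; rewrite hh2; [exact: hA4 | lia])
               ltac:(move=> e ->; rewrite hh2; [exact: hA5 | lia])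
               ltac:(move=> e ->; rewrite hh2; [exact: hA6 | lia])
               ltac:(move=> e ->; rewrite hh2; [exact: hA7 | lia]).
have stAll : steps W prog (112 + ((15 * (n - 1) + 10) + (8 + ((10 * (3 * n - 2) + 7) + 11)))) 0
   (mem5 n m t s3 s4 h0) = Some (156, mem5 (6 * n) (m + 5 * n) (t + 4) s3 s4 h2).
  by rewrite steps_add stA /= steps_add st1 /= steps_add stB /= steps_add st2 /= stC.
exists (mem5 (6 * n) (m + 5 * n) (t + 4) s3 s4 h2); split.
  apply: (run_steps stAll); [vm_compute; reflexivity | lia].
split; last by [].
rewrite /decode_graph /Gout mem5_0 mem5_1; congr Graph.
rewrite iotaD map_cat; congr cat.
  rewrite -[RHS](mkseq_nth (0, 0) (gE G)) /mkseq.
  apply/eq_in_map => i; rewrite mem_iota add0n => hi.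
  have [f1 f2] := init_edge t hi.
  case: (posnP i) => hi0.
    subst i; rewrite muln0 !addn0 mem5_3 mem5_4 /s3 /s4 e1 e2.
    by case: (nth (0, 0) (gE G) 0).
  have hlow : forall a, 4 < a -> a < 3 + 2 * m -> h2 a = h0 a.
    move=> a h4 ha; rewrite inv2h2 //.
    rewrite (_ : (_ && _) = false); last by apply/negbTE/negP => /andP [? ?]; lia.
    apply: hA1 => //; rewrite /EE; lia.
  rewrite !mem5_h; try lia.
  rewrite !hlow; try lia.
  rewrite /h0 f1 f2; by case: (nth (0, 0) (gE G) i).
rewrite add0n (_ : iota m (5 * n) = map (addn m) (iota 0 (5 * n))); last first.
  by rewrite -iotaDl addn0.
rewrite -map_comp /NE; apply/eq_in_map => i; rewrite mem_iota add0n => hi; rewrite /comp; cbv beta.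
rewrite !mem5_h; try lia.
rewrite !inv2h2; try lia.
rewrite (_ : (3 + 2 * m <= 3 + 2 * (m + i)) && _ = true); last by apply/andP; split; lia.
rewrite (_ : (3 + 2 * m <= 4 + 2 * (m + i)) && _ = true); last by apply/andP; split; lia.
rewrite (_ : 3 + 2 * (m + i) - (3 + 2 * m) = 2 * i); last lia.
rewrite (_ : 4 + 2 * (m + i) - (3 + 2 * m) = 2 * i + 1); last lia.
rewrite outv_even outv_odd; by case: (ne n i).
Qed.

Theorem theorem4 :
  exists (P : seq instr) (c : nat),
    forall (G : graph) (t : nat),
      simple_graph G -> connected G ->
      exists M : memory,
        run ((gn G + gm G + t + 2) ^ c) P (c * (gn G + gm G + 1)) 0 (init_mem G t)
          = Some M /\
        let G' := decode_graph M in
        let t' := decode_t M in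
        [/\ simple_graph G', connected G',
            (t <= diameter G <-> t' <= diameter G'),
            gn G' + gm G' <= c * (gn G + gm G + 1)
          & bisection_width G' + min_degree G' <= 2].
Proof.
exists prog, 200 => G t hs hc.
have [M [hr [hd ht]]] := prog_correct t hs hc.
exists M; split; first exact: hr.
rewrite hd ht /=; split.
- exact: simple_out.
- exact: conn_out.
- rewrite diam_out // /D; lia.
- rewrite /gm /= size_cat size_NE; lia.
- have := bw_out hs hc; have := mindeg_out hs hc; lia.
Qed.
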